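(* Fix positive integers $n_x$ and $N_h$, a scalar $\epsilon_r>0$ and a scalar $\eta>0$. Let $A_j, B, C, C_J, L, \Delta A \in \mathbb{R}^{n_x\times n_x}$ be given, with $B$ invertible, and let $C$ and $C_J$ be invertible. For $K\in\mathbb{R}^{n_x\times n_x}$ define $F_p(K,\delta_j)$, $F_r(K,\delta_j)$, $q(K,\delta_j)$ and $\kappa=F_p(K,\delta_j)F_r(K,\delta_j)^{-1}$ as in the context. Then there is a constant $\mu$ that does not depend on $K$ such that for every $K\in\mathbb{R}^{n_x\times n_x}$ $$q(K,\delta_j)\le \mu\,\bar q(K,\delta_j)^{f},\qquad \bar q(K,\delta_j)\triangleq \eta\|K\|_F^2+\sum_{i=2}^{n_xN_h}\sigma_i(\kappa^{-1}),\qquad f\triangleq n_xN_h-1 .$$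
   Context: Here $\delta_j$ labels one fixed realization of a parametric uncertainty. $A_j$ is the plant system matrix under $\delta_j$, $B$ is the input matrix, $C$ the measurement matrix, $C_J$ the performance output matrix, $L$ an observer gain, $\Delta A$ a given matrix (the uncertainty perturbation of the system matrix), and $K$ the feedback controller. Set $A_{x,j}\triangleq A_j+BKC$ and $A_{e,j}\triangleq A_j-LC$. For $\upsilon\in\{x,e\}$, $F_{\upsilon a}\in\mathbb{R}^{n_xN_h\times n_xN_h}$ is the block lower-triangular matrix whose $(k,l)$ block ($k,l=1,\dots,N_h$, blocks of size $n_x\times n_x$) is $A_{\upsilon,j}^{k-l}B$ for $k\ge l$ and $0$ for $k<l$. In particular $F_{xa}=F_{xa}(K,\delta_j)$ depends on $K$, while $F_{ea}=F_{ea}(\delta_j)$ does not. $F_{ex}(\delta_j)\in\mathbb{R}^{n_xN_h\times n_xN_h}$ is the strictly block lower-triangular matrix whose $(k,l)$ block is $A_{e,j}^{k-l-1}\Delta A$ for $k>l$ and $0$ otherwise. Define $$F_p(K,\delta_j)=(I_{N_h}\otimes C_J)F_{xa}(K,\delta_j),\qquad F_r(K,\delta_j)=(I_{N_h}\otimes C)\big(F_{ea}(\delta_j)+F_{ex}(\delta_j)F_{xa}(K,\delta_j)\big),$$ and $$q(K,\delta_j)=\sup\{\|F_p(K,\delta_j)\mathbf a\|_2^2:\ \mathbf a\in\mathbb{R}^{n_xN_h},\ \|F_r(K,\delta_j)\mathbf a\|_2^2\le\epsilon_r\}.$$ This is the worst-case squared performance-output energy over the horizon $N_h$ caused by a stacked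 attack sequence $\mathbf a$, subject to a bound on the detection-output energy and with zero initial state. $\|K\|_F$ is the Frobenius norm. $\sigma_1(M)\le\sigma_2(M)\le\dots\le\sigma_{n_xN_h}(M)$ denote the singular values of $M$ in nondecreasing order, so the sum in $\bar q$ omits the smallest singular value of $\kappa^{-1}$. *)

(* Defs.v *)
From HB Require Import structures.
From mathcomp Require Import all_boot all_order all_algebra.
From mathcomp Require Import all_classical all_reals ereal.
Set Implicit Arguments. Unset Strict Implicit. Unset Printing Implicit Defensive.
Import Order.TTheory GRing.Theory Num.Theory.
Local Open Scope ring_scope.

Section Defs.
Variable R : realType.

(* block index of a stacked index i : 'I_(Nh*nx): (block k, position r);
   row-major order, i.e. i = k*nx + r *)
Definition blkidx (Nh nx : nat) (i : 'I_(Nh * nx)) : 'I_Nh * 'I_nx :=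
  enum_val (cast_ord (esym (mxvec_cast Nh nx)) i).

Definition blk (Nh nx : nat) (F : 'I_Nh -> 'I_Nh -> 'M[R]_nx) : 'M[R]_(Nh * nx) :=
  \matrix_(i, j) F (blkidx i).1 (blkidx j).1 (blkidx i).2 (blkidx j).2.

Definition kronI (Nh nx : nat) (M : 'M[R]_nx) : 'M[R]_(Nh * nx) :=
  blk (fun k l => if k == l then M else 0).

Definition Fa (Nh nx : nat) (Av B : 'M[R]_nx) : 'M[R]_(Nh * nx) :=
  blk (fun k l : 'I_Nh => if (l <= k)%N then Av ^+ (k - l) *m B else 0).

Definition Fex (Nh nx : nat) (Ae dA : 'M[R]_nx) : 'M[R]_(Nh * nx) :=
  blk (fun k l : 'I_Nh => if (l < k)%N then Ae ^+ (k - l - 1) *m dA else 0).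

Definition Axj (nx : nat) (Aj B C K : 'M[R]_nx) := Aj + B *m K *m C.
Definition Aej (nx : nat) (Aj L C : 'M[R]_nx) := Aj - L *m C.

Definition Fp (Nh nx : nat) (Aj B C CJ K : 'M[R]_nx) : 'M[R]_(Nh * nx) :=
  kronI Nh CJ *m Fa Nh (Axj Aj B C K) B.

Definition Fr (Nh nx : nat) (Aj B C L dA K : 'M[R]_nx) : 'M[R]_(Nh * nx) :=
  kronI Nh C *m (Fa Nh (Aej Aj L C) B
                 + Fex Nh (Aej Aj L C) dA *m Fa Nh (Axj Aj B C K) B).

Definition sqnorm (n : nat) (v : 'cV[R]_n) : R := \sum_i (v i 0) ^+ 2.

Definition frob2 (m n : nat) (M : 'M[R]_(m, n)) : R := \sum_i \sum_j (M i j) ^+ 2.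

Definition qfun (Nh nx : nat) (epsr : R) (Aj B C CJ L dA K : 'M[R]_nx) : \bar R :=
  ereal_sup [set (sqnorm (Fp Nh Aj B C CJ K *m a))%:E | a in
             [set a : 'cV[R]_(Nh * nx) | sqnorm (Fr Nh Aj B C L dA K *m a) <= epsr]].

(* s is the vector of singular values of M, in nondecreasing order:
   M = U diag(s) V^T with U, V orthogonal, s >= 0 nondecreasing *)
Definition singvals (n : nat) (M : 'M[R]_n) (s : 'I_n -> R) : Prop :=
  [/\ (forall i, 0 <= s i),
      (forall i j : 'I_n, (i <= j)%N -> s i <= s j) &
      exists U V : 'M[R]_n,
        [/\ U^T *m U = 1%:M, V^T *m V = 1%:M &
            M = U *m diag_mx (\row_i s i) *m V^T]].

End Defs.

(* Main.v *)
Require Import Defs.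
From HB Require Import structures.
From mathcomp Require Import all_boot all_order all_algebra.
From mathcomp Require Import all_classical all_reals ereal.
From mathcomp Require Import zify ring lra.
Import Order.TTheory GRing.Theory Num.Theory.
Set Implicit Arguments. Unset Strict Implicit. Unset Printing Implicit Defensive.
Local Open Scope ring_scope.

Section Blk.
Variable R : realType.
Variables Nh nx : nat.

Lemma blkidx_bij : bijective (@blkidx Nh nx).
Proof.
exists (fun p => cast_ord (mxvec_cast Nh nx) (enum_rank p)).
  by move=> i; rewrite /blkidx enum_valK cast_ordKV.
by move=> p; rewrite /blkidx cast_ordK enum_rankK.
Qed.

Lemma blkidx_inj : injective (@blkidx Nh nx).
Proof. exact: bij_inj blkidx_bij. Qed.

Lemma sum_blkidx (f : 'I_Nh -> 'I_nx -> R) :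
  \sum_(i < Nh * nx) f (blkidx i).1 (blkidx i).2 = \sum_(k < Nh) \sum_(r < nx) f k r.
Proof.
rewrite (reindex (fun p => cast_ord (mxvec_cast Nh nx) (enum_rank p))) /=; last first.
  exists (@blkidx Nh nx) => [p _|i _]; first by rewrite /blkidx cast_ordK enum_rankK.
  by rewrite /blkidx enum_valK cast_ordKV.
under eq_bigr do rewrite /blkidx cast_ordK enum_rankK.
by rewrite pair_big.
Qed.

Lemma eq_blk (F G : 'I_Nh -> 'I_Nh -> 'M[R]_nx) :
  (forall k l, F k l = G k l) -> blk F = blk G.
Proof. by move=> FG; apply/matrixP => i j; rewrite !mxE FG. Qed.

Lemma blk_mul (F G : 'I_Nh -> 'I_Nh -> 'M[R]_nx) :
  blk F *m blk G = blk (fun k l => \sum_m F k m *m G m l).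
Proof.
apply/matrixP => i j; rewrite !mxE summxE; under eq_bigr do rewrite !mxE.
have /= -> := sum_blkidx (fun k r => F (blkidx i).1 k (blkidx i).2 r * G k (blkidx j).1 r (blkidx j).2).
by apply: eq_bigr => k _; rewrite /mulmx mxE.
Qed.

Lemma blk_add (F G : 'I_Nh -> 'I_Nh -> 'M[R]_nx) :
  blk F + blk G = blk (fun k l => F k l + G k l).
Proof. by apply/matrixP => i j; rewrite !mxE. Qed.

Lemma kronI_mul (A B : 'M[R]_nx) : kronI Nh A *m kronI Nh B = kronI Nh (A *m B).
Proof.
rewrite /kronI blk_mul; apply: eq_blk => k l.
rewrite (bigD1 k) //= eqxx big1 => [|m /negbTE mk]; last by rewrite eq_sym mk mul0mx.
by rewrite addr0; case: eqP => _; rewrite ?mulmx0.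
Qed.

Lemma kronI1 : kronI Nh (1%:M : 'M[R]_nx) = 1%:M.
Proof.
apply/matrixP => i j; rewrite !mxE.
have -> : (i == j) = (blkidx i == blkidx j) by rewrite (inj_eq blkidx_inj).
case: (blkidx i) (blkidx j) => k r [l r'] /=.
by rewrite xpair_eqE; case: (k == l); rewrite !mxE.
Qed.

Lemma kronI_unit (A : 'M[R]_nx) : A \in unitmx -> kronI Nh A \in unitmx.
Proof.
move=> uA; have := kronI_mul A (invmx A); rewrite mulmxV // kronI1.
by case/mulmx1_unit.
Qed.


Definition ordpred (k : 'I_Nh) : 'I_Nh := Ordinal (leq_ltn_trans (leq_pred k) (ltn_ord k)).
Definition Tm (Z : 'M[R]_nx) := blk (fun k l : 'I_Nh =>
  (if k == l then 1%:M else 0) - (if (k == l.+1 :> nat) then Z else 0)).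
Definition Sh (D : 'M[R]_nx) := blk (fun k l : 'I_Nh => if (k == l.+1 :> nat) then D else 0).

Lemma Tm_mul Z G : Tm Z *m blk G =
  blk (fun k l => G k l - (if (0 < k)%N then Z *m G (ordpred k) l else 0)).
Proof.
rewrite /Tm blk_mul; apply: eq_blk => k l.
under eq_bigr do rewrite mulmxBl.
rewrite sumrB; congr (_ - _).
  rewrite (bigD1 k) //= eqxx mul1mx big1 ?addr0 // => m /negbTE mk.
  by rewrite eq_sym mk mul0mx.
case: (posnP k) => [k0|kpos].
  by rewrite big1 // => m _; rewrite k0 mul0mx.
rewrite (bigD1 (ordpred k)) //= prednK // eqxx big1 ?addr0 // => m /eqP mk.
case: eqP => [km|]; last by rewrite mul0mx.
by exfalso; apply: mk; apply: val_inj => /=; rewrite km.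
Qed.

Lemma Tm_Fa Z W : Tm Z *m Fa Nh Z W = kronI Nh W.
Proof.
rewrite /Fa Tm_mul /kronI; apply: eq_blk => k l /=.
case: (ltngtP k l) => [kl|lk|/val_inj kl].
- try (rewrite (_ : (l <= k)%N = false); last by lia).
  rewrite (_ : (k == l) = false); last by apply: contraTF kl => /eqP ->; rewrite ltnn.
  case: ifP => _; rewrite ?subr0 //.
  by rewrite (_ : (l <= k.-1)%N = false) ?mulmx0 ?subr0 //; lia.
- try (rewrite (_ : (l <= k)%N = true); last by lia).
  rewrite (_ : (k == l) = false); last by apply: contraTF lk => /eqP ->; rewrite ltnn.
  try (rewrite (_ : (0 < k)%N = true); last by lia).
  try (rewrite (_ : (l <= k.-1)%N = true); last by lia).
  rewrite !mulmxE mulrA -exprS (_ : (k.-1 - l).+1 = k - l)%N ?subrr //; lia.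
- subst l; rewrite ?leqnn eqxx subnn expr0 mulmxE mul1r.
  case: ifP => kp; rewrite ?subr0 //.
  by rewrite (_ : (k <= k.-1)%N = false) ?mulmx0 ?mulr0 ?subr0 //; lia.
Qed.

Lemma Tm_Fex E D : Tm E *m Fex Nh E D = Sh D.
Proof.
rewrite /Fex Tm_mul /Sh; apply: eq_blk => k l /=.
case: (ltngtP k l.+1) => [kl|lk|kl].
- try (rewrite (_ : (l < k)%N = false); last by lia).
  try (rewrite (_ : (k == l.+1 :> nat) = false); last by lia).
  case: ifP => _; rewrite ?subr0 //.
  by rewrite (_ : (l < k.-1)%N = false) ?mulmx0 ?subr0 //; lia.
- try (rewrite (_ : (l < k)%N = true); last by lia).
  try (rewrite (_ : (k == l.+1 :> nat) = false); last by lia).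
  try (rewrite (_ : (0 < k)%N = true); last by lia).
  try (rewrite (_ : (l < k.-1)%N = true); last by lia).
  rewrite !mulmxE mulrA -exprS (_ : (k.-1 - l - 1).+1 = k - l - 1)%N ?subrr //; lia.
- rewrite kl /= subSnn subnn expr0 mulmxE mul1r.
  by rewrite ltnn ?mulmx0 ?mulr0 subr0.
Qed.

Lemma Tm_Sh X D : Tm X + Sh D = Tm (X - D).
Proof.
rewrite /Tm /Sh blk_add; apply: eq_blk => k l.
by case: (k == l.+1 :> nat); rewrite ?subr0 ?addr0 // opprB addrA addrAC.
Qed.

Lemma Tm_unit Z : Tm Z \in unitmx.
Proof. by have := Tm_Fa Z 1%:M; rewrite kronI1 => /mulmx1_unit []. Qed.

Lemma Tm_inv Z : Fa Nh Z 1%:M *m Tm Z = 1%:M.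
Proof. by apply: mulmx1C; rewrite Tm_Fa kronI1. Qed.

End Blk.

Section Norms.
Variable R : realType.

Lemma cs n (a b : 'I_n -> R) :
  (\sum_i a i * b i) ^+ 2 <= (\sum_i a i ^+ 2) * (\sum_i b i ^+ 2).
Proof.
have H : 0 <= \sum_i \sum_j (a i * b j - a j * b i) ^+ 2.
  by apply: sumr_ge0 => i _; apply: sumr_ge0 => j _; apply: sqr_ge0.
have E : \sum_i \sum_j (a i * b j - a j * b i) ^+ 2 =
   (\sum_i \sum_j a i ^+ 2 * b j ^+ 2) + (\sum_i \sum_j a j ^+ 2 * b i ^+ 2)
   - 2 * (\sum_i \sum_j (a i * b i) * (a j * b j)).
  rewrite mulr_sumr -!big_split /= -sumrB; apply: eq_bigr => i _.
  rewrite mulr_sumr -!big_split /= -sumrB; apply: eq_bigr => j _.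
  by ring.
have E1 : \sum_i \sum_j a j ^+ 2 * b i ^+ 2 = \sum_i \sum_j a i ^+ 2 * b j ^+ 2.
  by rewrite exchange_big.
have E2 : (\sum_i \sum_j a i ^+ 2 * b j ^+ 2) = (\sum_i a i ^+ 2) * (\sum_i b i ^+ 2).
  by rewrite mulr_suml; apply: eq_bigr => i _; rewrite mulr_sumr.
have E3 : (\sum_i \sum_j (a i * b i) * (a j * b j)) = (\sum_i a i * b i) ^+ 2.
  by rewrite expr2 mulr_suml; apply: eq_bigr => i _; rewrite mulr_sumr.
rewrite E E1 E2 E3 in H; lra.
Qed.

Lemma frob2_ge0 m n (A : 'M[R]_(m, n)) : 0 <= frob2 A.
Proof. by apply: sumr_ge0 => i _; apply: sumr_ge0 => j _; apply: sqr_ge0. Qed.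

Lemma frob2_mul m n p (A : 'M[R]_(m, n)) (B : 'M[R]_(n, p)) :
  frob2 (A *m B) <= frob2 A * frob2 B.
Proof.
rewrite /frob2.
apply: (@le_trans _ _ (\sum_i \sum_j (\sum_k A i k ^+ 2) * (\sum_k B k j ^+ 2))).
  apply: ler_sum => i _; apply: ler_sum => j _; rewrite mxE; apply: cs.
have -> : \sum_k \sum_j B k j ^+ 2 = \sum_j \sum_k B k j ^+ 2 by exact: exchange_big.
by rewrite mulr_suml; apply: ler_sum => i _; rewrite mulr_sumr.
Qed.

Lemma sqnorm_frob n (v : 'cV[R]_n) : sqnorm v = frob2 v.
Proof. by rewrite /frob2; apply: eq_bigr => i _; rewrite big_ord1. Qed.

Lemma sqnorm_mul m n (A : 'M[R]_(m, n)) v : sqnorm (A *m v) <= frob2 A * sqnorm v.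
Proof. by rewrite !sqnorm_frob; apply: frob2_mul. Qed.

Lemma frob2_add m n (A B : 'M[R]_(m, n)) : frob2 (A + B) <= 2 * frob2 A + 2 * frob2 B.
Proof.
rewrite /frob2 !mulr_sumr -big_split /=; apply: ler_sum => i _.
rewrite !mulr_sumr -big_split /=; apply: ler_sum => j _; rewrite mxE.
have := sqr_ge0 (A i j - B i j); nra.
Qed.

Lemma frob2_1 n : frob2 (1%:M : 'M[R]_n) = n%:R.
Proof.
rewrite /frob2 -[n in RHS]card_ord -sum1_card natr_sum; apply: eq_bigr => i _.
rewrite (bigD1 i) //= big1 ?mxE ?eqxx ?addr0 ?expr1n // => j ji.
by rewrite mxE eq_sym (negbTE ji) expr0n.
Qed.

Lemma frob2_exp n (Z : 'M[R]_n) m : frob2 (Z ^+ m) <= n%:R * (1 + frob2 Z) ^+ m.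
Proof.
have hz := frob2_ge0 Z.
elim: m => [|m IH]; first by rewrite expr0 frob2_1 expr0 mulr1.
rewrite exprS -mulmxE; apply: le_trans (frob2_mul _ _) _.
rewrite exprS mulrCA; apply: ler_pM => //; first exact: frob2_ge0.
lra.
Qed.

End Norms.


Section More.
Variable R : realType.

Lemma frob2_0 m n : frob2 (0 : 'M[R]_(m, n)) = 0.
Proof. by rewrite /frob2 big1 // => i _; rewrite big1 // => j _; rewrite mxE expr0n. Qed.

Lemma frob2_blk Nh nx (F : 'I_Nh -> 'I_Nh -> 'M[R]_nx) :
  frob2 (blk F) = \sum_k \sum_l frob2 (F k l).
Proof.
rewrite /frob2.
transitivity (\sum_(i < Nh * nx) \sum_(l < Nh) \sum_(r' < nx)
   (F (blkidx i).1 l (blkidx i).2 r') ^+ 2).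
  apply: eq_bigr => i _.
  have /= <- := sum_blkidx (fun l r' => (F (blkidx i).1 l (blkidx i).2 r') ^+ 2).
  by apply: eq_bigr => j _; rewrite mxE.
have /= -> := sum_blkidx (fun k r => \sum_(l < Nh) \sum_(r' < nx) (F k l r r') ^+ 2).
by apply: eq_bigr => k _; rewrite exchange_big.
Qed.

Lemma frob2_Fa Nh nx (Y : 'M[R]_nx) :
  frob2 (Fa Nh Y 1%:M) <= (Nh * Nh * nx)%:R * (1 + frob2 Y) ^+ Nh.-1.
Proof.
rewrite /Fa frob2_blk.
have hY := frob2_ge0 Y.
have hP : 0 <= (1 + frob2 Y) ^+ Nh.-1 by rewrite exprn_ge0 // addr_ge0.
apply: (@le_trans _ _ (\sum_(k < Nh) \sum_(l < Nh) (nx%:R * (1 + frob2 Y) ^+ Nh.-1))).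
  apply: ler_sum => k _; apply: ler_sum => l _.
  case: ifP => lk.
    rewrite mulmx1; apply: le_trans (frob2_exp _ _) _.
    rewrite ler_wpM2l // ler_weXn2l //; first by rewrite lerDl.
    have := ltn_ord k; lia.
  by rewrite frob2_0 mulr_ge0.
rewrite sumr_const card_ord sumr_const card_ord !mulr_natl -!mulrnA.
by rewrite (_ : (nx * (Nh * Nh))%N = (Nh * Nh * nx)%N) //; lia.
Qed.

Lemma sqnormT n (v : 'cV[R]_n) : sqnorm v = (v^T *m v) 0 0.
Proof. by rewrite mxE; apply: eq_bigr => i _; rewrite mxE expr2. Qed.

Lemma sqnorm_orth n (W : 'M[R]_n) v : W^T *m W = 1%:M -> sqnorm (W *m v) = sqnorm v.
Proof. by move=> hW; rewrite !sqnormT trmx_mul -mulmxA (mulmxA W^T) hW mul1mx. Qed.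

Lemma sv_bound n (M : 'M[R]_n) s (i0 : 'I_n) x :
  singvals M s -> (forall i, s i <= s i0) -> sqnorm (M *m x) <= s i0 ^+ 2 * sqnorm x.
Proof.
case=> s0 _ [U [V [hU hV ->]]] hmax.
have hV' : (V^T)^T *m V^T = 1%:M by rewrite trmxK; apply: mulmx1C.
rewrite -!mulmxA sqnorm_orth // -(sqnorm_orth x hV').
set w := V^T *m x.
rewrite /sqnorm mulr_sumr; apply: ler_sum => i _.
rewrite mul_diag_mx !mxE exprMn ler_wpM2r ?sqr_ge0 //.
by rewrite !expr2; apply: ler_pM.
Qed.

Lemma sqnorm_delta n (i0 : 'I_n) : sqnorm (delta_mx i0 0 : 'cV[R]_n) = 1.
Proof.
rewrite /sqnorm (bigD1 i0) //= big1 ?mxE ?eqxx ?addr0 ?expr1n // => j ji.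
by rewrite mxE (negbTE ji) expr0n.
Qed.

End More.
Lemma final_ineq (R : realType) (c1 u b0 eta t S sl Qb : R) (d f : nat) :
  0 <= c1 -> 1 <= u -> 0 <= b0 -> 0 < eta -> 0 <= t -> 0 <= S -> (d <= f)%N ->
  Qb = eta * t + S -> 1 <= sl ^+ 2 * (c1 * (u + b0 * t) ^+ d) -> 0 <= sl ->
  ((0 < f)%N -> sl <= S) ->
  c1 * (u + b0 * t) ^+ d <=
    (c1 * (u + b0 / eta) ^+ d + (c1 * (u + b0 / eta) ^+ d) ^+ f.+1) * Qb ^+ f.
Proof.
move=> c10 u1 b00 eta0 t0 S0 df hQb hlow sl0 hsl.
set w := u + b0 / eta; set Z := c1 * w ^+ d; set P := c1 * _ ^+ d.
have hb : b0 * t = (b0 / eta) * (eta * t) by field; rewrite gt_eqF.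
have be0 : 0 <= b0 / eta by rewrite divr_ge0 // ltW.
have et0 : 0 <= eta * t by rewrite mulr_ge0 // ltW.
have w0 : 0 <= w by rewrite /w; lra.
have Z0 : 0 <= Z by rewrite mulr_ge0 // exprn_ge0.
have Qb0 : 0 <= Qb by rewrite hQb; lra.
have ut0 : 0 <= u + b0 * t by have := mulr_ge0 b00 t0; lra.
have QbfZ : 0 <= Z * Qb ^+ f by rewrite mulr_ge0 // exprn_ge0.
have Zf0 : 0 <= Z ^+ f.+1 * Qb ^+ f by rewrite mulr_ge0 // exprn_ge0.
case: (lerP 1 Qb) => hQ.
  have h1 : u + b0 * t <= w * Qb.
    rewrite /w mulrDl hb; apply: lerD.
      by rewrite -{1}(mulr1 u) ler_wpM2l //; lra.
    by rewrite ler_wpM2l // hQb; lra.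
  apply: (@le_trans _ _ (Z * Qb ^+ f)); last by rewrite mulrDl; lra.
  apply: (@le_trans _ _ (Z * Qb ^+ d)).
    rewrite /P /Z -mulrA -exprMn ler_wpM2l //.
    by apply: lerXn2r; rewrite ?nnegrE //; apply: mulr_ge0.
  by rewrite ler_wpM2l // ler_weXn2l.
have hPZ : P <= Z.
  rewrite /P /Z ler_wpM2l //; apply: lerXn2r; rewrite ?nnegrE //.
  rewrite /w hb; have : eta * t <= 1 by rewrite hQb in hQ; lra.
  by move=> h; have := ler_wpM2l be0 h; lra.
clearbody Z.
case: f df hsl QbfZ Zf0 => [|f] df hsl QbfZ Zf0.
  by rewrite expr0 mulr1 expr1; lra.
have slQ : sl <= Qb by have := hsl isT; rewrite hQb; lra.
have h2 : 1 <= Z * Qb ^+ 2.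
  apply: le_trans hlow _; rewrite mulrC; apply: ler_pM => //.
    by apply: mulr_ge0 => //; apply: exprn_ge0.
    by apply: exprn_ge0.
  by apply: lerXn2r; rewrite ?nnegrE.
have h3 : Qb ^+ (f.+1 + f.+1) <= Qb ^+ f.+1.
  rewrite exprD -[X in _ <= X]mulr1 ler_wpM2l ?exprn_ge0 //.
  by apply: exprn_ile1 => //; rewrite ltW.
have h4 : Z <= Z ^+ f.+2 * Qb ^+ f.+1.
  apply: (@le_trans _ _ (Z ^+ f.+2 * Qb ^+ (f.+1 + f.+1))); last first.
    by rewrite ler_wpM2l // exprn_ge0.
  have -> : Z ^+ f.+2 * Qb ^+ (f.+1 + f.+1) = Z * (Z * Qb ^+ 2) ^+ f.+1.
    by rewrite exprMn -exprM mul2n -addnn [Z ^+ f.+2]exprS mulrA.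
  by rewrite -{1}(mulr1 Z) ler_wpM2l // exprn_ege1.
rewrite mulrDl; lra.
Qed.

Theorem lemma2 (R : realType) (nx Nh : nat) (epsr eta : R)
  (Aj B C CJ L dA : 'M[R]_nx) :
  (0 < nx)%N -> (0 < Nh)%N -> 0 < epsr -> 0 < eta ->
  B \in unitmx -> C \in unitmx -> CJ \in unitmx ->
  exists mu : R, forall (K : 'M[R]_nx) (s : 'I_(Nh * nx) -> R),
    singvals (invmx (Fp Nh Aj B C CJ K *m invmx (Fr Nh Aj B C L dA K))) s ->
    (qfun Nh epsr Aj B C CJ L dA K
     <= (mu * (eta * frob2 K + \sum_(i < Nh * nx | (0 < i)%N) s i) ^+ (Nh * nx).-1)%:E)%E.
Proof.
move=> nx0 Nh0 eps0 eta0 uB uC uCJ.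
pose E := Aej Aj L C.
pose c0 := frob2 (kronI Nh CJ) * frob2 (Tm Nh E) * frob2 (kronI Nh (invmx C)).
pose c1 := c0 * (Nh * Nh * nx)%:R.
pose a0 := 2 * frob2 (Aj - dA).
pose b0 := 2 * (frob2 B * frob2 C).
pose u := 1 + a0.
pose Z := c1 * (u + b0 / eta) ^+ Nh.-1.
exists (epsr * (Z + Z ^+ (Nh * nx).-1.+1)).
move=> K s hs.
pose X := Axj Aj B C K. pose Y := X - dA.
pose Kp := kronI Nh CJ *m Fa Nh Y 1%:M *m Tm Nh E *m kronI Nh (invmx C).
have hFa : Tm Nh X *m Fa Nh X B = kronI Nh B by rewrite Tm_Fa.
have uFa : Fa Nh X B \in unitmx.
  by have := @kronI_unit _ Nh _ _ uB; rewrite -hFa unitmx_mul => /andP[].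
pose Q := Fa Nh E B + Fex Nh E dA *m Fa Nh X B.
have hQ : Tm Nh E *m Q = Tm Nh Y *m Fa Nh X B.
  by rewrite /Q mulmxDr Tm_Fa mulmxA Tm_Fex -hFa -mulmxDl Tm_Sh.
have uQ : Q \in unitmx.
  have : Tm Nh Y *m Fa Nh X B \in unitmx by rewrite unitmx_mul Tm_unit uFa.
  by rewrite -hQ unitmx_mul => /andP[].
have hFr : Fr Nh Aj B C L dA K = kronI Nh C *m Q by [].
have uFr : Fr Nh Aj B C L dA K \in unitmx by rewrite hFr unitmx_mul kronI_unit.
have hFp : Fp Nh Aj B C CJ K = kronI Nh CJ *m Fa Nh X B by [].
have uFp : Fp Nh Aj B C CJ K \in unitmx by rewrite hFp unitmx_mul kronI_unit.
have hKp : Kp *m Fr Nh Aj B C L dA K = Fp Nh Aj B C CJ K.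
  rewrite hFr hFp /Kp -!mulmxA (mulmxA (kronI Nh (invmx C))) kronI_mul mulVmx //.
  by rewrite kronI1 mul1mx hQ (mulmxA (Fa Nh Y 1%:M)) Tm_inv mul1mx.
have hkap : Fp Nh Aj B C CJ K *m invmx (Fr Nh Aj B C L dA K) = Kp.
  by rewrite -hKp -mulmxA mulmxV // mulmx1.
have uKp : Kp \in unitmx by move: uFp; rewrite -hKp unitmx_mul => /andP[].
rewrite hkap in hs.
set t := frob2 K.
have t0 : 0 <= t := frob2_ge0 K.
have hY : frob2 Y <= a0 + b0 * t.
  have -> : Y = (Aj - dA) + B *m K *m C by rewrite /Y /X /Axj addrAC.
  apply: le_trans (frob2_add _ _) _.
  have h3 : frob2 (B *m K *m C) <= frob2 B * t * frob2 C.
    by apply: le_trans (frob2_mul _ _) _; rewrite ler_wpM2r ?frob2_ge0 // frob2_mul.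
  rewrite /a0 /b0; lra.
have c00 : 0 <= c0 by rewrite /c0 !mulr_ge0 ?frob2_ge0.
have c10 : 0 <= c1 by rewrite /c1 mulr_ge0.
have a00 : 0 <= a0 by rewrite /a0 mulr_ge0 ?frob2_ge0.
have b00 : 0 <= b0 by rewrite /b0 !mulr_ge0 ?frob2_ge0.
have hP : frob2 Kp <= c1 * (u + b0 * t) ^+ Nh.-1.
  have e1 := frob2_mul (kronI Nh CJ *m Fa Nh Y 1%:M *m Tm Nh E) (kronI Nh (invmx C)).
  have e2 := frob2_mul (kronI Nh CJ *m Fa Nh Y 1%:M) (Tm Nh E).
  have e3 := frob2_mul (kronI Nh CJ) (Fa Nh Y 1%:M).
  have e4 := frob2_Fa Nh Y.
  have e5 : (1 + frob2 Y) ^+ Nh.-1 <= (u + b0 * t) ^+ Nh.-1.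
    have := frob2_ge0 Y => fy0.
    by apply: lerXn2r; rewrite ?nnegrE /u; lra.
  have e6 : frob2 (Fa Nh Y 1%:M) <= (Nh * Nh * nx)%:R * (u + b0 * t) ^+ Nh.-1.
    by apply: le_trans e4 _; rewrite ler_wpM2l.
  apply: (le_trans e1).
  apply: (@le_trans _ _ (frob2 (kronI Nh CJ) * frob2 (Fa Nh Y 1%:M) * frob2 (Tm Nh E)
                          * frob2 (kronI Nh (invmx C)))).
    rewrite ler_wpM2r ?frob2_ge0 //; apply: (le_trans e2).
    by rewrite ler_wpM2r ?frob2_ge0.
  have -> : frob2 (kronI Nh CJ) * frob2 (Fa Nh Y 1%:M) * frob2 (Tm Nh E)
            * frob2 (kronI Nh (invmx C)) = c0 * frob2 (Fa Nh Y 1%:M) by rewrite /c0; ring.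
  by rewrite /c1 -mulrA ler_wpM2l.
have npos : (0 < Nh * nx)%N by rewrite muln_gt0 Nh0 nx0.
have hil : ((Nh * nx).-1 < Nh * nx)%N by rewrite ltn_predL.
pose il := Ordinal hil.
have [s0 mono _] := hs.
have hmax : forall i, s i <= s il.
  by move=> i; apply: mono; rewrite /= -ltnS prednK.
have hlow : 1 <= s il ^+ 2 * (c1 * (u + b0 * t) ^+ Nh.-1).
  pose y := delta_mx il 0 : 'cV[R]_(Nh * nx).
  have := sv_bound (Kp *m y) hs hmax.
  rewrite mulmxA mulVmx // mul1mx sqnorm_delta => h.
  have h2 := sqnorm_mul Kp y; rewrite sqnorm_delta mulr1 in h2.
  by apply: le_trans h _; rewrite ler_wpM2l ?sqr_ge0 //; exact: le_trans h2 hP.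
set S := \sum_(i < Nh * nx | (0 < i)%N) s i.
have S0 : 0 <= S by apply: sumr_ge0 => i _; exact: s0.
have hsl : (0 < (Nh * nx).-1)%N -> s il <= S.
  move=> hf; rewrite /S (bigD1 il) //= lerDl; apply: sumr_ge0 => i _; exact: s0.
apply/ereal_supP => _ [a ha <-]; rewrite lee_fin.
have hqa : sqnorm (Fp Nh Aj B C CJ K *m a) <= (c1 * (u + b0 * t) ^+ Nh.-1) * epsr.
  rewrite -hKp -mulmxA; apply: le_trans (sqnorm_mul _ _) _.
  apply: ler_pM; [exact: frob2_ge0 | rewrite sqnorm_frob; exact: frob2_ge0 | exact: hP | exact: ha].
apply: le_trans hqa _.
have df : (Nh.-1 <= (Nh * nx).-1)%N by rewrite -!subn1 leq_sub2r // leq_pmulr.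
have u1 : 1 <= u by rewrite /u lerDl.
have fin := final_ineq c10 u1 b00 eta0 t0 S0 df (erefl _) hlow (s0 il) hsl.
rewrite mulrC -mulrA; apply: ler_wpM2l; first exact: ltW.
exact: fin.
Qed.
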